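(* Let $d\ge2$, $t\ge 0$, and let $\Phi_t:\mathbb M_d\to\mathbb M_d$, $\Phi_t(X)=\mathrm{Tr}(X)I_d-tX$. Fix $\alpha\in[1,d]$ and write $k:=\lfloor\alpha\rfloor$, $\theta:=\alpha-k\in[0,1)$. Then $$\Phi_t\in\mathsf P_\alpha\iff t\le t^\ast_\alpha:=\frac{k+\theta^2}{(k+\theta)^2},$$ and in fact $\lambda_\alpha(C_{\Phi_t})=1-t\frac{(k+\theta)^2}{k+\theta^2}$. Moreover the threshold is sharp: if $t>t^\ast_\alpha$ there exists $x\in\mathcal V_\alpha$ with $\langle x,C_{\Phi_t}x\rangle<0$; if $\alpha\in(k,k+1)$ one may take $x$ with Schmidt coefficients $\frac{1}{\sqrt{k+\theta^2}}$ ($k$ times), $\frac{\theta}{\sqrt{k+\theta^2}}$, and $0$ otherwise; if $\alpha=d$ one may take $x=\omega:=\frac1{\sqrt d}\sum_{i=1}^de_i\otimes e_i$.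
   Context: Here $n=m=d$. The Choi matrix of a linear $\Phi:\mathbb M_d\to\mathbb M_d$ is $C_\Phi=\sum_{i,j}E_{ij}\otimes\Phi(E_{ij})$ (matrix units $E_{ij}$; one has $C_{\Phi_t}=I\otimes I-td\,\omega\omega^\ast$). Schmidt coefficients $s_1(\psi)\ge\dots\ge s_d(\psi)\ge0$ of $\psi=\sum a_{ij}e_i\otimes e_j$ are the singular values of $[a_{ij}]$. For $\alpha\in[1,d]$ with $k=\lfloor\alpha\rfloor$, $\theta=\alpha-k$, $r=\lceil\alpha\rceil$, a unit vector $\psi$ is $\alpha$-admissible if $s_j(\psi)=0$ for $j\ge r+1$ and, when $\theta>0$, $s_{k+1}(\psi)\le\frac\theta k\sum_{j=1}^ks_j(\psi)$; $\mathcal V_\alpha$ is the set of these. For Hermitian $W$, $\lambda_\alpha(W):=\min\{\langle x,Wx\rangle:x\in\mathcal V_\alpha\}$. A Hermitian-preserving $\Phi$ is in $\mathsf P_\alpha$ if $\langle\psi,C_\Phi\psi\rangle\ge0$ for all $\psi\in\mathcal V_\alpha$ (equivalently $\lambda_\alpha(C_\Phi)\ge0$). *)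

(* Defs.v *)
From HB Require Import structures.
From mathcomp Require Import all_boot all_order all_algebra.
From mathcomp Require Import reals complex mxtens.
Set Implicit Arguments. Unset Strict Implicit. Unset Printing Implicit Defensive.
Import Order.TTheory GRing.Theory Num.Theory.
Local Open Scope ring_scope.
Local Open Scope complex_scope.

Section Defs.
Variable R : realType.
Local Notation C := R[i].

Definition cconj_mx m n (A : 'M[C]_(m, n)) : 'M[C]_(m, n) := map_mx (fun z => z^*) A.
Definition adjmx m n (A : 'M[C]_(m, n)) : 'M[C]_(n, m) := (cconj_mx A)^T.
Definition is_hermitian n (A : 'M[C]_n) : Prop := adjmx A = A.
Definition is_unitary n (U : 'M[C]_n) : Prop := U *m adjmx U = 1%:M.

(* Vectors of C^d (x) C^d are column vectors of size d*d, the basis vector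
   e_i (x) e_j sitting at index mxtens_index (i,j) (the convention of tensmx).
   coefmx psi is the coefficient matrix [a_ij] with psi = sum a_ij e_i (x) e_j. *)
Definition coefmx d (psi : 'cV[C]_(d * d)) : 'M[C]_d :=
  \matrix_(i, j) psi (mxtens_index (i, j)) 0.

Definition is_unit_vec n (x : 'cV[C]_n) : Prop := (adjmx x *m x) 0 0 = 1.

Definition qform n (W : 'M[C]_n) (x : 'cV[C]_n) : C := (adjmx x *m W *m x) 0 0.

(* s (0-indexed: s i = s_{i+1}) is the nonincreasing sequence of Schmidt
   coefficients (= singular values) of the coefficient matrix A:
   A = U diag(s) V with U, V unitary, s >= 0 nonincreasing. *)
Definition schmidt_coeffs d (A : 'M[C]_d) (s : 'I_d -> R) : Prop :=
  (forall i : 'I_d, 0 <= s i) /\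
  (forall i j : 'I_d, (i <= j)%N -> s j <= s i) /\
  exists U V : 'M[C]_d, is_unitary U /\ is_unitary V /\
    A = U *m diag_mx (\row_i (s i)%:C) *m V.

Definition kfloor (alpha : R) : nat := Num.truncn alpha.
Definition theta_of (alpha : R) : R := alpha - (kfloor alpha)%:R.
Definition rceil (alpha : R) : nat :=
  if theta_of alpha == 0 then kfloor alpha else (kfloor alpha).+1.

Definition admissible d (alpha : R) (psi : 'cV[C]_(d * d)) : Prop :=
  is_unit_vec psi /\
  exists s : 'I_d -> R, schmidt_coeffs (coefmx psi) s /\
    (forall j : 'I_d, (rceil alpha <= j)%N -> s j = 0) /\
    (0 < theta_of alpha ->
       forall j : 'I_d, nat_of_ord j = kfloor alpha ->
         s j <= theta_of alpha / (kfloor alpha)%:R *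
                \sum_(i : 'I_d | (i < kfloor alpha)%N) s i).

Definition is_lambda d (alpha : R) (W : 'M[C]_(d * d)) (v : R) : Prop :=
  (exists x, admissible alpha x /\ qform W x = v%:C) /\
  (forall x, admissible alpha x -> v%:C <= qform W x).

Definition choi d (Phi : 'M[C]_d -> 'M[C]_d) : 'M[C]_(d * d) :=
  \sum_(i < d) \sum_(j < d) (delta_mx i j *t Phi (delta_mx i j)).

Definition hermitian_preserving d (Phi : 'M[C]_d -> 'M[C]_d) : Prop :=
  forall X, is_hermitian X -> is_hermitian (Phi X).

Definition in_P d (alpha : R) (Phi : 'M[C]_d -> 'M[C]_d) : Prop :=
  hermitian_preserving Phi /\
  forall psi, admissible alpha psi -> 0 <= qform (choi Phi) psi.

Definition Phi_t d (t : R) (X : 'M[C]_d) : 'M[C]_d := (\tr X)%:M - t%:C *: X.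

Definition omega d : 'cV[C]_(d * d) :=
  \col_a (let ij := mxtens_unindex a in
          if ij.1 == ij.2 then (Num.sqrt (d%:R))^-1%:C else 0).

End Defs.

(* Main.v *)
Require Import Defs.
From HB Require Import structures.
From mathcomp Require Import all_boot all_order all_algebra.
From mathcomp Require Import reals complex mxtens.
From mathcomp Require Import ring lra.
Import Order.TTheory GRing.Theory Num.Theory.
Local Open Scope ring_scope.
Local Open Scope complex_scope.


Lemma adjmxE {R : realType} {m n} (A : 'M[R[i]]_(m, n)) i j : adjmx A i j = (A j i)^*.
Proof. by rewrite !mxE. Qed.

Lemma adjmxM {R : realType} {m n p} (A : 'M[R[i]]_(m, n)) (B : 'M[R[i]]_(n, p)) :
  adjmx (A *m B) = adjmx B *m adjmx A.
Proof.
apply/matrixP => i j; rewrite !mxE; rewrite rmorph_sum; apply: eq_bigr => k _.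
by rewrite !mxE rmorphM mulrC.
Qed.

Lemma adjmx1 {R : realType} {n} : adjmx (1%:M : 'M[R[i]]_n) = 1%:M.
Proof. by apply/matrixP => i j; rewrite !mxE eq_sym rmorphMn rmorph1. Qed.

Lemma sum_pairs {R : realType} {d} (F : 'I_(d * d) -> R[i]) :
  \sum_a F a = \sum_i \sum_j F (mxtens_index (i, j)).
Proof.
rewrite pair_big /=.
rewrite (reindex (@mxtens_index d d)) /=; last first.
  by apply: onW_bij; exists (@mxtens_unindex d d); [exact: (@mxtens_indexK d d) | exact: (@mxtens_unindexK d d)].
by apply: eq_bigr => -[i j].
Qed.

Lemma adj_self {R : realType} {d} (x : 'cV[R[i]]_(d * d)) :
  (adjmx x *m x) 0 0 = \sum_i \sum_j (coefmx x i j)^* * coefmx x i j.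
Proof.
rewrite !mxE sum_pairs; apply: eq_bigr => i _; apply: eq_bigr => j _.
by rewrite !mxE.
Qed.

Lemma tr_adj {R : realType} {d} (A : 'M[R[i]]_d) :
  \tr (A *m adjmx A) = \sum_i \sum_j (A i j)^* * A i j.
Proof.
rewrite /mxtrace; apply: eq_bigr => i _; rewrite !mxE; apply: eq_bigr => j _.
by rewrite !mxE mulrC.
Qed.

Lemma sum2_delta {R : realType} {d} (i k : 'I_d) (H : 'I_d -> 'I_d -> R[i]) :
  \sum_p \sum_q (((i == p) && (k == q))%:R * H p q) = H i k.
Proof.
rewrite (bigD1 i) //= [X in _ + X]big1 ?addr0; last first.
  by move=> p /negbTE ip; apply: big1 => q _; rewrite eq_sym ip /= mul0r.
rewrite (bigD1 k) //= [X in _ + X]big1 ?addr0 ?eqxx ?mul1r //.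
by move=> q /negbTE kq; rewrite eq_sym kq andbF mul0r.
Qed.

Definition wvec (R : realType) d : 'cV[R[i]]_(d * d) :=
  \col_a (if (mxtens_unindex a).1 == (mxtens_unindex a).2 then 1 else 0).

Lemma idx_eq {d} (i j k l : 'I_d) :
  (mxtens_index (i, j) == mxtens_index (k, l)) = (i == k) && (j == l).
Proof. by rewrite (inj_eq (can_inj (@mxtens_indexK d d))) xpair_eqE. Qed.

Lemma tr_delta {R : realType} {d} (i k : 'I_d) :
  \tr (delta_mx i k : 'M[R[i]]_d) = (i == k)%:R.
Proof.
rewrite /mxtrace (bigD1 i) //= [X in _ + X]big1 ?addr0; first by rewrite mxE eqxx.
by move=> p /negbTE pi; rewrite mxE pi.
Qed.

Lemma choi_Phi {R : realType} {d} (t : R) :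
  choi (@Phi_t R d t) = 1%:M - t%:C *: (wvec R d *m (wvec R d)^T).
Proof.
apply/matrixP => a b.
case: (mxtens_indexP a) => i j; case: (mxtens_indexP b) => k l.
rewrite /choi summxE.
under eq_bigr do rewrite summxE.
under eq_bigr do under eq_bigr do rewrite tensmxE [delta_mx _ _ i k]mxE.
rewrite (@sum2_delta R d i k (fun p q => Phi_t t (delta_mx p q) j l)).
rewrite !mxE big_ord1 !mxE !mxtens_indexK /= idx_eq.
rewrite tr_delta [j == i]eq_sym [l == k]eq_sym.
by case: (i == k); case: (j == l); case: (i == j); case: (k == l); rewrite /= ?mulr1 ?mulr0 ?mul1r ?mul0r.
Qed.

Lemma wT_x {R : realType} {d} (x : 'cV[R[i]]_(d * d)) :
  ((wvec R d)^T *m x) 0 0 = \tr (coefmx x).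
Proof.
rewrite !mxE sum_pairs /mxtrace; apply: eq_bigr => i _.
rewrite (bigD1 i) //= [X in _ + X]big1 ?addr0.
  by rewrite !mxE mxtens_indexK /= eqxx mul1r.
by move=> j /negbTE ji; rewrite !mxE mxtens_indexK /= eq_sym ji mul0r.
Qed.

Lemma adjx_w {R : realType} {d} (x : 'cV[R[i]]_(d * d)) :
  (adjmx x *m wvec R d) 0 0 = (\tr (coefmx x))^*.
Proof.
rewrite -wT_x !mxE rmorph_sum; apply: eq_bigr => a _.
by rewrite !mxE rmorphM mulrC; case: ifP; rewrite ?rmorph1 ?rmorph0.
Qed.

Lemma qform_choi {R : realType} {d} (t : R) (x : 'cV[R[i]]_(d * d)) :
  qform (choi (@Phi_t R d t)) x = (adjmx x *m x) 0 0 - t%:C * `|\tr (coefmx x)| ^+ 2.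
Proof.
rewrite /qform choi_Phi mulmxBr mulmx1 mulmxBl -scalemxAr -scalemxAl.
have e : adjmx x *m (wvec R d *m (wvec R d)^T) *m x =
   (adjmx x *m wvec R d) *m ((wvec R d)^T *m x) by rewrite !mulmxA.
rewrite e !mxE big_ord1; congr (_ - _ * _).
by rewrite sqr_normc mulrC -(adjx_w x) -(wT_x x).
Qed.

Lemma unitary_mul {R : realType} {d} (U V : 'M[R[i]]_d) :
  Defs.is_unitary U -> Defs.is_unitary V -> Defs.is_unitary (V *m U).
Proof.
rewrite /Defs.is_unitary => hU hV.
by rewrite adjmxM mulmxA -(mulmxA V) hU mulmx1 hV.
Qed.

Lemma unitary_diag_le1 {R : realType} {d} (W : 'M[R[i]]_d) i :
  Defs.is_unitary W -> `|W i i| <= 1.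
Proof.
move=> hW.
have e : \sum_j W i j * (W i j)^* = 1.
  have := congr1 (fun M : 'M[R[i]]_d => M i i) (hW : W *m adjmx W = 1%:M); rewrite /= !mxE eqxx /=.
  move=> h; transitivity (\sum_j W i j * adjmx W j i); last exact: h.
  by apply: eq_bigr => j _; rewrite !mxE.
rewrite -(@expr_le1 _ 2 _ isT (normr_ge0 _)).
rewrite sqr_normc -e (bigD1 i) //= lerDl.
by apply: sumr_ge0 => j _; rewrite -sqr_normc exprn_ge0.
Qed.

Lemma tr_UDV {R : realType} {d} (U V : 'M[R[i]]_d) (r : 'rV[R[i]]_d) :
  \tr (U *m diag_mx r *m V) = \sum_i r 0 i * (V *m U) i i.
Proof.
rewrite mxtrace_mulC mulmxA mul_mx_diag /mxtrace; apply: eq_bigr => i _.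
by rewrite mxE mulrC.
Qed.

Lemma norm_tr_le {R : realType} {d} (A : 'M[R[i]]_d) s :
  schmidt_coeffs A s -> `|\tr A| <= (\sum_i s i)%:C.
Proof.
case=> s0 [_ [U [V [hU [hV ->]]]]].
rewrite tr_UDV rmorph_sum; apply: le_trans (ler_norm_sum _ _ _) _.
apply: ler_sum => i _; rewrite normrM mxE ger0_norm ?ler0c //.
rewrite -[X in _ <= X]mulr1; apply: ler_wpM2l; first by rewrite ler0c.
exact: (@unitary_diag_le1 R d _ i (@unitary_mul R d U V hU hV)).
Qed.

Lemma sum_sq {R : realType} {d : nat} (psi : 'cV[R[i]]_(d * d)) s :
  is_unit_vec psi -> schmidt_coeffs (coefmx psi) s -> \sum_i (s i) ^+ 2 = 1.
Proof.
move=> hu [s0 [_ [U [V [hU [hV hA]]]]]].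
have h1 : (adjmx psi *m psi) 0 0 = \tr (coefmx psi *m adjmx (coefmx psi)).
  by rewrite adj_self tr_adj.
have hU' : adjmx U *m U = 1%:M by apply: mulmx1C.
have h2 : coefmx psi *m adjmx (coefmx psi) =
   U *m (diag_mx (\row_i (s i)%:C) *m adjmx (diag_mx (\row_i (s i)%:C))) *m adjmx U.
  rewrite hA !adjmxM !mulmxA -(mulmxA _ V) hV mulmx1 -!mulmxA.
  done.
have h3 : \tr (coefmx psi *m adjmx (coefmx psi)) = 1 by rewrite -h1.
rewrite h2 mxtrace_mulC [adjmx U *m _]mulmxA hU' mul1mx tr_adj in h3.
apply: complexI; rewrite rmorph_sum -[RHS]h3 /=; apply: eq_bigr => i _.
rewrite (bigD1 i) //= [X in _ + X]big1 ?addr0.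
  rewrite !mxE eqxx /= mulr1n. by apply/eqP; rewrite eq_complex /=; simpc.
by move=> j ji; rewrite !mxE (eq_sym i j) (negbTE ji) mulr0n mulr0.
Qed.

Lemma sum_lt_const {R : realType} {d k : nat} (c : R) : (k <= d)%N ->
  \sum_(i < d | (i < k)%N) c = k%:R * c.
Proof.
move=> hk.
have := @big_ord_widen_cond R 0 +%R k d (fun _ => true) (fun _ => c) hk.
rewrite /= => <-; by rewrite sumr_const card_ord mulr_natl.
Qed.

Lemma sum_rest {R : realType} {d k : nat} {F : 'I_d -> R} (hk : (k < d)%N) :
  (forall j : 'I_d, (k < j)%N -> F j = 0) ->
  \sum_(j < d | ~~ (j < k)%N) F j = F (Ordinal hk).
Proof.
move=> hF; rewrite (bigD1 (Ordinal hk)) /= ?ltnn // [X in _ + X]big1 ?addr0 //.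
move=> j /andP [jk jne]; apply: hF.
rewrite ltn_neqAle leqNgt jk andbT; apply/negP => /eqP e.
by move/eqP: jne; apply; apply: val_inj.
Qed.

Lemma sum_rest0 {R : realType} {d k : nat} {F : 'I_d -> R} :
  (forall j : 'I_d, (k <= j)%N -> F j = 0) ->
  \sum_(j < d | ~~ (j < k)%N) F j = 0.
Proof. by move=> hF; apply: big1 => j; rewrite -leqNgt; apply: hF. Qed.

Lemma cauchy_schwarz {R : realType} {d : nat} (P : pred 'I_d) (a : 'I_d -> R) :
  (\sum_(i | P i) a i) ^+ 2 <= (\sum_(i | P i) 1) * \sum_(i | P i) a i ^+ 2.
Proof.
set N := \sum_(i | P i) (1 : R); set S := \sum_(i | P i) a i; set Q := \sum_(i | P i) a i ^+ 2.
have h : 0 <= \sum_(i | P i) \sum_(j | P j) (a i - a j) ^+ 2.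
  by apply: sumr_ge0 => i _; apply: sumr_ge0 => j _; exact: sqr_ge0.
have e : \sum_(i | P i) \sum_(j | P j) (a i - a j) ^+ 2 = 2 * (N * Q) - 2 * S ^+ 2.
  have e1 : forall i, \sum_(j | P j) (a i - a j) ^+ 2 =
      a i ^+ 2 * N - 2 * a i * S + Q.
    move=> i; rewrite /N /S /Q mulr_sumr mulr_sumr -sumrB -big_split /=.
    by apply: eq_bigr => j _; ring.
  rewrite (eq_bigr _ (fun i _ => e1 i)) big_split sumrB /= -mulr_suml -mulr_suml.
  have -> : \sum_(i | P i) Q = N * Q.
    by rewrite /N mulr_suml; apply: eq_bigr => i _; rewrite mul1r.
  have -> : \sum_(i | P i) 2 * a i = 2 * S by rewrite /S mulr_sumr.
  rewrite -/Q; ring.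
rewrite e in h; lra.
Qed.
Lemma core_ineq (R : realFieldType) (S u k th : R) : 1 <= k -> 0 <= th -> th < 1 ->
  0 <= S -> 0 <= u -> S^+2 <= k*(1-u^+2) -> k*u <= th*S ->
  (S+u)^+2 * (k + th^+2) <= (k+th)^+2.
Proof.
move=> k1 th0 th1 S0 u0 hS hu.
have h1 : 0 <= th*S - k*u by lra.
have h3 : (k+2*th-1)*(k*u) <= (k+2*th-1)*(th*S) by apply: ler_wpM2l; lra.
have h4 : 0 <= S*(2*(1-th)*(k+th)) by apply: mulr_ge0 => //; apply: mulr_ge0; lra.
have h2 : 0 <= S*(2*k+th-k*th) - k*(k+2*th-1)*u by nra.
have h5 : 0 <= (th*S - k*u) * (S*(2*k+th-k*th) - k*(k+2*th-1)*u) by apply: mulr_ge0.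
have e : (k+th)^+2*(S^+2+k*u^+2) - k*(k+th^+2)*(S+u)^+2 =
   (th*S - k*u) * (S*(2*k+th-k*th) - k*(k+2*th-1)*u) by ring.
have h6 : k*((S+u)^+2 * (k + th^+2)) <= k * (k+th)^+2.
  have : (k+th)^+2*(S^+2+k*u^+2) <= (k+th)^+2 * k.
    apply: ler_wpM2l; first exact: sqr_ge0. nra.
  nra.
rewrite ler_pM2l in h6 => //; lra.
Qed.

Lemma kfacts {R : realType} {d : nat} {alpha : R} : 1 <= alpha <= d%:R ->
  [/\ (1 <= kfloor alpha)%N, (kfloor alpha <= d)%N, 0 <= theta_of alpha,
      theta_of alpha < 1 & (0 < theta_of alpha -> (kfloor alpha < d)%N)].
Proof.
move=> /andP [a1 ad].
have a0 : 0 <= alpha by apply: le_trans a1.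
have /andP [lo hi] := truncn_itv a0.
rewrite -natr1 in hi.
split.
- by rewrite /kfloor truncn_gt0.
- by rewrite /kfloor truncn_le_nat -natr1; lra.
- by rewrite /theta_of subr_ge0.
- rewrite /theta_of /kfloor; lra.
- move=> hth; rewrite -(ltr_nat R); rewrite /theta_of in hth; lra.
Qed.

Lemma sum_bound {R : realType} {d : nat} (alpha : R) (s : 'I_d -> R) :
  1 <= alpha <= d%:R -> (forall i, 0 <= s i) -> \sum_i s i ^+ 2 = 1 ->
  (forall j : 'I_d, (rceil alpha <= j)%N -> s j = 0) ->
  (0 < theta_of alpha -> forall j : 'I_d, nat_of_ord j = kfloor alpha ->
    s j <= theta_of alpha / (kfloor alpha)%:R *
           \sum_(i : 'I_d | (i < kfloor alpha)%N) s i) ->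
  (\sum_i s i) ^+ 2 * ((kfloor alpha)%:R + theta_of alpha ^+ 2)
     <= ((kfloor alpha)%:R + theta_of alpha) ^+ 2.
Proof.
move=> ha s0 s2 hz hth.
have [k1 kd th0 th1 thk] := kfacts ha.
have hrc : rceil alpha = if theta_of alpha == 0 then kfloor alpha else (kfloor alpha).+1 by [].
move: hz hth thk hrc k1 kd th0 th1.
set k := kfloor alpha; set th := theta_of alpha => hz hth thk hrc k1 kd th0 th1.
rewrite (bigID (fun i : 'I_d => (i < k)%N)) /=.
rewrite (bigID (fun i : 'I_d => (i < k)%N)) /= in s2.
have cs := cauchy_schwarz (fun i : 'I_d => (i < k)%N) s.
rewrite /= sum_lt_const // mulr1 in cs.
have S0 : 0 <= \sum_(i < d | (i < k)%N) s i by apply: sumr_ge0.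
have k1' : 1 <= k%:R :> R by rewrite ler1n.
case: (eqVneq th 0) => [th_eq|th_ne].
  rewrite th_eq eqxx in hrc.
  rewrite hrc in hz.
  rewrite sum_rest0 // in s2; last by move=> j /hz ->; rewrite expr0n.
  rewrite sum_rest0 //; rewrite th_eq.
  move: cs S0 s2 k1'.
  set S := \sum_(i < d | (i < k)%N) s i; set Q := \sum_(i < d | (i < k)%N) s i ^+ 2.
  move=> cs S0 s2 k1'; nra.
have thp : 0 < th by rewrite lt_def th_ne th0.
rewrite (negbTE th_ne) in hrc; rewrite hrc in hz.
have hk := thk thp.
rewrite (sum_rest hk) in s2; last by move=> j hj; rewrite hz ?expr0n.
rewrite (sum_rest hk); last by move=> j hj; rewrite hz.
have hu := hth thp (Ordinal hk) erefl.
move: cs S0 s2 k1' hu.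
set S := \sum_(i < d | (i < k)%N) s i; set Q := \sum_(i < d | (i < k)%N) s i ^+ 2.
set u := s (Ordinal hk).
move=> cs S0 s2 k1' hu.
have u0 : 0 <= u by apply: s0.
have hku : k%:R * u <= th * S.
  have e : th * S = k%:R * (th / k%:R * S) by field; lra.
  by rewrite e ler_wpM2l //; lra.
apply: core_ineq => //; have -> : 1 - u ^+ 2 = Q by lra. exact: cs.
Qed.

Lemma adm_bound {R : realType} {d : nat} (alpha : R) (psi : 'cV[R[i]]_(d * d)) :
  1 <= alpha <= d%:R -> admissible alpha psi ->
  `|\tr (coefmx psi)| ^+ 2 <=
   ((((kfloor alpha)%:R + theta_of alpha) ^+ 2 /
     ((kfloor alpha)%:R + theta_of alpha ^+ 2)))%:C.
Proof.
move=> ha [hu [s [hs [hz hth]]]].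
have hn := norm_tr_le _ _ hs.
have s2 := sum_sq _ _ hu hs.
have s0 : forall i, 0 <= s i by case: hs.
have sb := sum_bound _ _ ha s0 s2 hz hth.
have [k1 _ th0 _ _] := kfacts ha.
have P0 : 0 < (kfloor alpha)%:R + theta_of alpha ^+ 2 :> R.
  have : 1 <= (kfloor alpha)%:R :> R by rewrite ler1n.
  have := sqr_ge0 (theta_of alpha); lra.
apply: le_trans (_ : ((\sum_i s i) ^+ 2)%:C <= _).
  rewrite rmorphXn /= !expr2; apply: ler_pM => //; exact: normr_ge0.
by rewrite lecR ler_pdivlMr.
Qed.

Lemma qform_lower {R : realType} {d : nat} (alpha t : R) (psi : 'cV[R[i]]_(d * d)) :
  1 <= alpha <= d%:R -> 0 <= t -> admissible alpha psi ->
  (1 - t * (((kfloor alpha)%:R + theta_of alpha) ^+ 2 /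
     ((kfloor alpha)%:R + theta_of alpha ^+ 2)))%:C <= qform (choi (@Phi_t R d t)) psi.
Proof.
move=> ha t0 hadm.
have hb := adm_bound _ _ ha hadm.
case: hadm => hu _.
rewrite qform_choi hu rmorphB rmorphM /= rmorph1 lerD2l lerN2.
by apply: ler_wpM2l => //; rewrite ler0c.
Qed.

Lemma conjCr {R : realType} (x : R) : (x%:C)^* = x%:C.
Proof. by rewrite /conjc /= oppr0. Qed.

Lemma herm_Phi {R : realType} {d : nat} (t : R) : hermitian_preserving (@Phi_t R d t).
Proof.
move=> X hX; apply/matrixP => i j.
have hX' : forall i j, (X j i)^* = X i j.
  by move=> a b; have := congr1 (fun M : 'M[R[i]]_d => M a b) hX; rewrite /= !mxE.
rewrite !mxE rmorphB rmorphM /= hX' oppr0 rmorphMn eq_sym; congr (_ *+ _ - _).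
rewrite /mxtrace rmorph_sum; apply: eq_bigr => k _; exact: hX'.
Qed.

Definition diagvec {R : realType} {d : nat} (s : 'I_d -> R) : 'cV[R[i]]_(d * d) :=
  \col_a (let ij := mxtens_unindex a in if ij.1 == ij.2 then (s ij.1)%:C else 0).

Lemma coef_diagvec {R : realType} {d : nat} (s : 'I_d -> R) :
  coefmx (diagvec s) = diag_mx (\row_i (s i)%:C).
Proof.
apply/matrixP => i j; rewrite !mxE mxtens_indexK /=.
by case: (eqVneq i j) => [->|ne]; rewrite ?eqxx ?mulr1n // (negbTE ne) mulr0n.
Qed.

Lemma diagvec_eq {R : realType} {d : nat} (s1 s2 : 'I_d -> R) :
  s1 =1 s2 -> diagvec s1 = diagvec s2.
Proof. by move=> e; apply/matrixP => a b; rewrite !mxE /= e. Qed.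

Lemma unitary1 {R : realType} {d : nat} : Defs.is_unitary (1%:M : 'M[R[i]]_d).
Proof. by rewrite /Defs.is_unitary adjmx1 mul1mx. Qed.

Lemma diagvec_schmidt {R : realType} {d : nat} (s : 'I_d -> R) :
  (forall i, 0 <= s i) -> (forall i j : 'I_d, (i <= j)%N -> s j <= s i) ->
  schmidt_coeffs (coefmx (diagvec s)) s.
Proof.
move=> s0 sm; split=> //; split=> //; exists 1%:M, 1%:M.
rewrite coef_diagvec mul1mx mulmx1; split; [exact: unitary1 | split; [exact: unitary1 | by []]].
Qed.

Lemma diagvec_unit {R : realType} {d : nat} (s : 'I_d -> R) :
  \sum_i s i ^+ 2 = 1 -> is_unit_vec (diagvec s).
Proof.
move=> h; rewrite /is_unit_vec adj_self coef_diagvec.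
rewrite -[1]/((1 : R)%:C) -h rmorph_sum; apply: eq_bigr => i _.
rewrite (bigD1 i) //= [X in _ + X]big1 ?addr0.
  by rewrite !mxE eqxx /= mulr1n; apply/eqP; rewrite eq_complex /=; simpc.
by move=> j ji; rewrite !mxE (eq_sym i j) (negbTE ji) mulr0n mulr0.
Qed.

Lemma diagvec_tr {R : realType} {d : nat} (s : 'I_d -> R) :
  \tr (coefmx (diagvec s)) = (\sum_i s i)%:C.
Proof.
rewrite coef_diagvec mxtrace_diag rmorph_sum; apply: eq_bigr => i _; by rewrite mxE.
Qed.

Lemma diagvec_qform {R : realType} {d : nat} (t : R) (s : 'I_d -> R) :
  (forall i, 0 <= s i) -> \sum_i s i ^+ 2 = 1 ->
  qform (choi (@Phi_t R d t)) (diagvec s) = (1 - t * (\sum_i s i) ^+ 2)%:C.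
Proof.
move=> s0 h; rewrite qform_choi (diagvec_unit _ h) diagvec_tr ger0_norm; last first.
  by rewrite ler0c; apply: sumr_ge0.
by rewrite rmorphB rmorphM rmorphXn.
Qed.

Lemma sum_step {R : realType} {d k : nat} (a b : R) (F : 'I_d -> R) :
  (k <= d)%N -> (k = d -> b = 0) ->
  (forall j : 'I_d, F j = if (j < k)%N then a else if nat_of_ord j == k then b else 0) ->
  \sum_j F j = k%:R * a + b.
Proof.
move=> kd hb hF; rewrite (bigID (fun j : 'I_d => (j < k)%N)) /=.
rewrite (eq_bigr (fun _ => a)); last by move=> j hj; rewrite hF hj.
rewrite sum_lt_const //; congr (_ + _).
case: (ltnP k d) => hk.
  rewrite (sum_rest hk); first by rewrite hF /= ltnn eqxx.
  by move=> j hj; rewrite hF ltnNge (ltnW hj) /= gtn_eqF.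
have e : k = d by apply/eqP; rewrite eqn_leq kd hk.
rewrite hb // sum_rest0 // => j hj; exfalso.
by have := ltn_ord j; rewrite ltnNge (leq_trans hk hj).
Qed.

Lemma witness {R : realType} {d : nat} (alpha t : R) : 1 <= alpha <= d%:R ->
  let k : R := (kfloor alpha)%:R in
  let th : R := theta_of alpha in
  let sw := fun j : 'I_d =>
            if (j < kfloor alpha)%N then (Num.sqrt (k + th ^+ 2))^-1
            else if nat_of_ord j == kfloor alpha
                 then th / Num.sqrt (k + th ^+ 2) else 0 in
  admissible alpha (diagvec sw) /\ schmidt_coeffs (coefmx (diagvec sw)) sw /\
  qform (choi (@Phi_t R d t)) (diagvec sw) = (1 - t * ((k + th) ^+ 2 / (k + th ^+ 2)))%:C.
Proof.
move=> ha k th sw.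
have [k1 kd th0 th1 thk] := kfacts ha.
have k1' : 1 <= k by rewrite /k ler1n.
have P0 : 0 < k + th ^+ 2 by have := sqr_ge0 th; lra.
set c := (Num.sqrt (k + th ^+ 2))^-1.
have c0 : 0 < c by rewrite invr_gt0 sqrtr_gt0.
have c2 : c ^+ 2 = (k + th ^+ 2)^-1 by rewrite exprVn sqr_sqrtr // ltW.
have hb : kfloor alpha = d -> th = 0.
  move=> e; move: ha => /andP [_ ad]; rewrite /th /theta_of e in th0 *; lra.
have swE : forall j, sw j = if (j < kfloor alpha)%N then c
                 else if nat_of_ord j == kfloor alpha then th * c else 0 by [].
have s0 : forall j, 0 <= sw j.
  move=> j; rewrite swE; case: ifP => _; first exact: ltW.
  by case: ifP => _ //; apply: mulr_ge0 => //; exact: ltW.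
have sm : forall i j : 'I_d, (i <= j)%N -> sw j <= sw i.
  move=> i j ij; rewrite !swE.
  case: (ltnP j (kfloor alpha)) => hj.
    by rewrite (leq_ltn_trans ij hj).
  case: eqP => hjk.
    case: (ltnP i (kfloor alpha)) => hi.
      by rewrite -[X in _ <= X]mul1r ler_wpM2r ?(ltW c0) // ltW.
    have -> : nat_of_ord i == kfloor alpha by rewrite eqn_leq hi -hjk ij.
    done.
  by case: ifP => _; [exact: ltW | case: ifP => _ //; apply: mulr_ge0 => //; exact: ltW].
have sum1 : \sum_j sw j = k * c + th * c.
  rewrite (@sum_step _ _ (kfloor alpha) c (th * c)) //.
  by move=> /hb ->; rewrite mul0r.
have sum2 : \sum_j sw j ^+ 2 = 1.
  rewrite (@sum_step _ _ (kfloor alpha) (c ^+ 2) ((th * c) ^+ 2)) //.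
  - rewrite exprMn c2 -/k; field; lra.
  - by move=> /hb ->; rewrite mul0r expr0n.
  - by move=> j; rewrite swE; case: ifP => _ //; case: ifP => _ //; rewrite expr0n.
have hsch : schmidt_coeffs (coefmx (diagvec sw)) sw by apply: diagvec_schmidt.
split; last split => //.
  split; first exact: diagvec_unit.
  exists sw; split => //; split.
    move=> j; rewrite /rceil -/th swE.
    case: eqP => [th_eq|th_ne] hj.
      rewrite ltnNge hj /=; case: ifP => // _; by rewrite th_eq mul0r.
    by rewrite ltnNge (ltnW hj) /= gtn_eqF.
  move=> thp j hj; rewrite swE hj ltnn eqxx.
  rewrite (eq_bigr (fun _ => c)); last by move=> i hi; rewrite swE hi.
  rewrite sum_lt_const // -/k.
  have -> : th / k * (k * c) = th * c by field; lra.
  done.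
rewrite diagvec_qform // sum1; congr ((1 - t * _)%:C).
rewrite -mulrDl exprMn c2; done.
Qed.

Theorem theorem3p16 (R : realType) (d : nat) (t alpha : R) :
  (2 <= d)%N -> 0 <= t -> 1 <= alpha <= d%:R ->
  let k : R := (kfloor alpha)%:R in
  let th : R := theta_of alpha in
  let tstar : R := (k + th ^+ 2) / (k + th) ^+ 2 in
  (in_P alpha (@Phi_t R d t) <-> t <= tstar) /\
  is_lambda alpha (choi (@Phi_t R d t)) (1 - t * ((k + th) ^+ 2 / (k + th ^+ 2))) /\
  (tstar < t ->
     exists x, admissible alpha x /\ qform (choi (@Phi_t R d t)) x < 0) /\
  (k < alpha < k + 1 -> tstar < t ->
     exists x, admissible alpha x /\ qform (choi (@Phi_t R d t)) x < 0 /\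
       schmidt_coeffs (coefmx x)
         (fun j : 'I_d =>
            if (j < kfloor alpha)%N then (Num.sqrt (k + th ^+ 2))^-1
            else if nat_of_ord j == kfloor alpha
                 then th / Num.sqrt (k + th ^+ 2) else 0)) /\
  (alpha = d%:R -> tstar < t ->
     admissible alpha (omega R d) /\ qform (choi (@Phi_t R d t)) (omega R d) < 0).
Proof.
move=> hd t0 ha k th tstar.
have [k1 kd th0 th1 thk] := kfacts ha.
have k1' : 1 <= k by rewrite /k ler1n.
have P0 : 0 < k + th ^+ 2 by have := sqr_ge0 th; lra.
have th0' : 0 <= th := th0.
have Q0 : 0 < (k + th) ^+ 2 by apply: exprn_gt0; lra.
have key : (t <= tstar) = (0 <= 1 - t * ((k + th) ^+ 2 / (k + th ^+ 2))).
  by rewrite /tstar ler_pdivlMr // subr_ge0 mulrA ler_pdivrMr // mul1r.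
have := witness alpha t ha; rewrite -/k -/th.
set sw := (fun j : 'I_d => _).
move=> [wadm [wsch wq]].
have lower := fun psi => qform_lower alpha t psi ha t0.
have neg : tstar < t -> qform (choi (@Phi_t R d t)) (diagvec sw) < 0.
  move=> hlt; rewrite wq -[0]/((0:R)%:C) ltcR ltNge -key -ltNge //.
split.
  split.
    case=> _ h; have := h _ wadm; by rewrite wq ler0c -key.
  move=> htt; split; first exact: herm_Phi.
  move=> psi hp; apply: le_trans (lower psi hp); by rewrite ler0c -key.
split.
  split; first by exists (diagvec sw).
  by move=> psi hp; exact: lower psi hp.
split.
  by move=> hlt; exists (diagvec sw); split => //; exact: neg.
split.
  by move=> _ hlt; exists (diagvec sw); split => //; split => //; exact: neg.
move=> hal hlt.
have kfd : kfloor alpha = d by rewrite /kfloor hal natrK.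
have th00 : th = 0 by rewrite /th /theta_of kfd hal subrr.
have -> : omega R d = diagvec sw.
  rewrite /omega; apply: (diagvec_eq (fun _ => (Num.sqrt d%:R)^-1)) => j.
  by rewrite /sw kfd ltn_ord th00 expr0n addr0 /k kfd.
by split => //; exact: neg.
Qed.
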